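(* Let $\ell^{\infty}$ be the space of bounded real sequences $x=(x_i)_{i\in\mathbb{N}}$, and for $p\in(0,\infty)$, $n\in\mathbb{N}$ let $$\|x\|_{\infty,p,n}:=\sup_{j\in\mathbb{N}}\Big(\frac{1}{n}\sum_{i=j}^{j+(n-1)}|x_i|^{p}\Big)^{1/p}.$$ Let $p\in[1,\infty)$ and $m,n\in\mathbb{N}$ with $n\leq m$. (i) If $n$ is a factor of $m$, i.e. $m=dn$ for some $d\in\mathbb{N}$, then $\|x\|_{\infty,p,m}\leq\|x\|_{\infty,p,n}$ for all $x\in\ell^{\infty}$. (ii) If $n$ is not a factor of $m$, then there exist $x,y\in\ell^{\infty}$ such that $\|x\|_{\infty,p,n}<\|x\|_{\infty,p,m}$ and $\|y\|_{\infty,p,m}<\|y\|_{\infty,p,n}$.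
   Context: $\mathbb{N}=\{1,2,3,\dots\}$. *)

(* Defs.v *)
From HB Require Import structures.
From mathcomp Require Import all_boot all_order all_algebra.
From mathcomp Require Import all_classical all_reals all_analysis.
Set Implicit Arguments. Unset Strict Implicit. Unset Printing Implicit Defensive.
Import Order.TTheory GRing.Theory Num.Theory.
Local Open Scope classical_set_scope.
Local Open Scope ring_scope.

(* A real sequence x = (x_i)_{i in N}, N = {1,2,...}; we use x : nat -> R and
   only look at indices i >= 1 (the value x 0 plays no role). *)
Definition bounded_seq (R : realType) (x : nat -> R) : Prop :=
  exists M : R, forall i : nat, (0 < i)%N -> `|x i| <= M.

Definition norm_inf_p_n (R : realType) (p : R) (n : nat) (x : nat -> R) : R :=
  sup [set ((n%:R)^-1 * \sum_(j <= i < j + n) (`|x i| `^ p)) `^ (p^-1)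
      | j in [set j : nat | (0 < j)%N]].

(* Main.v *)
Require Import Defs.
From HB Require Import structures.
From mathcomp Require Import all_boot all_order all_algebra.
From mathcomp Require Import all_classical all_reals all_analysis.
From mathcomp Require Import zify lra.
Require Import Defs.
Import Order.TTheory GRing.Theory Num.Theory.
Local Open Scope ring_scope.
Set Implicit Arguments. Unset Strict Implicit.

Section H.
Variable R : realType.

Lemma per_sum (f : nat -> R) n : (forall i, f (i + n)%N = f i) ->
  forall j, \sum_(j <= i < j + n) f i = \sum_(0 <= i < n) f i.
Proof.
move=> fp; elim=> [//|j IH].
have E : \sum_(j <= i < (j + n).+1) f i = f j + \sum_(j.+1 <= i < j.+1 + n) f i.
  rewrite (big_cat_nat _ (n:=j.+1)) //=; last by rewrite ltnS leq_addr.
  by rewrite big_nat1 addSn.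
have E2 : \sum_(j <= i < (j + n).+1) f i = \sum_(j <= i < j + n) f i + f (j + n)%N.
  by rewrite big_nat_recr //= leq_addr.
by rewrite -IH; apply: (@addrI _ (f j)); rewrite -E E2 fp addrC.
Qed.

Lemma split_sum (f : nat -> R) n j d :
  \sum_(j <= i < j + d * n) f i =
  \sum_(k < d) \sum_(j + k * n <= i < j + k * n + n) f i.
Proof.
elim: d => [|d IH]; first by rewrite mul0n addn0 big_geq // big_ord0.
rewrite big_ord_recr /= -IH.
rewrite (big_cat_nat _ (n:=j + d * n)) //=; [|by rewrite leq_addr|by lia].
by rewrite mulSn [(n + _)%N]addnC addnA.
Qed.

Lemma powR_inv_le (p a b : R) : 0 < p -> 0 <= a -> 0 <= b ->
  (a `^ p^-1 <= b) = (a <= b `^ p).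
Proof.
move=> p0 a0 b0; apply/idP/idP => h.
- have -> : a = (a `^ p^-1) `^ p by rewrite -powRrM mulVf ?gt_eqF // powRr1.
  by apply: ge0_ler_powR; rewrite ?nnegrE ?powR_ge0 // ltW.
- have -> : b = (b `^ p) `^ p^-1 by rewrite -powRrM mulfV ?gt_eqF // powRr1.
  by apply: ge0_ler_powR; rewrite ?nnegrE ?powR_ge0 ?invr_ge0 // ltW.
Qed.

Lemma powR_bool (p : R) (b : bool) : p != 0 -> `|(b%:R : R)| `^ p = b%:R.
Proof. by move=> p0; case: b; rewrite ?normr1 ?normr0 ?powR1 ?powR0. Qed.


Definition elt (p : R) (n : nat) (x : nat -> R) (j : nat) : R :=
  ((n%:R)^-1 * \sum_(j <= i < j + n) (`|x i| `^ p)) `^ (p^-1).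

Lemma norm_le (p : R) n x b : (forall j, (0 < j)%N -> elt p n x j <= b) ->
  norm_inf_p_n p n x <= b.
Proof.
move=> h; apply: ge_sup.
  by exists (elt p n x 1); exists 1%N.
by move=> _ [j hj <-]; apply: h.
Qed.

Lemma elt_bound (p : R) n x M : 0 < p -> (0 < n)%N -> 0 <= M ->
  (forall i, (0 < i)%N -> `|x i| <= M) ->
  forall j, (0 < j)%N -> elt p n x j <= M.
Proof.
move=> p0 n0 M0 hx j j0; rewrite /elt powR_inv_le //; last first.
  by rewrite mulr_ge0 ?invr_ge0 // sumr_ge0 // => i _; rewrite powR_ge0.
rewrite ler_pdivrMl ?ltr0n //.
apply: le_trans (_ : \sum_(j <= i < j + n) M `^ p <= _).
  apply: ler_sum_nat => i /andP [hi _].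
  apply: (ge0_ler_powR (ltW p0)); rewrite ?nnegrE //; apply: hx; exact: leq_trans hi.
by rewrite sumr_const_nat addKn mulr_natl.
Qed.

Lemma elt_le_norm (p : R) n x : 0 < p -> (0 < n)%N -> bounded_seq x ->
  forall j, (0 < j)%N -> elt p n x j <= norm_inf_p_n p n x.
Proof.
move=> p0 n0 [M hM] j j0.
have M0 : 0 <= M by apply: le_trans (hM 1%N isT).
apply: ub_le_sup; last by exists j.
exists M => _ [k hk <-]; exact: elt_bound.
Qed.


Lemma part1 (p : R) m n x : 0 < p -> (0 < n)%N -> (0 < m)%N -> (n %| m)%N ->
  bounded_seq x -> norm_inf_p_n p m x <= norm_inf_p_n p n x.
Proof.
move=> p0 n0 m0 /dvdnP [d md] bx.
set S := norm_inf_p_n p n x.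
have S0 : 0 <= S.
  exact: (le_trans (powR_ge0 _ _) (elt_le_norm p0 n0 bx (isT : (0 < 1)%N))).
apply: norm_le => j j0; rewrite /elt powR_inv_le //; last first.
  by rewrite mulr_ge0 ?invr_ge0 // sumr_ge0 // => i _; rewrite powR_ge0.
rewrite ler_pdivrMl ?ltr0n // md split_sum.
have bk : forall k : 'I_d, \sum_(j + k * n <= i < j + k * n + n) `|x i| `^ p
    <= n%:R * S `^ p.
  move=> k; have := elt_le_norm p0 n0 bx (_ : (0 < j + k * n)%N).
  move=> /(_ (leq_trans j0 (leq_addr _ _))).
  rewrite /elt powR_inv_le //; last first.
    by rewrite mulr_ge0 ?invr_ge0 // sumr_ge0 // => i _; rewrite powR_ge0.
  by rewrite ler_pdivrMl ?ltr0n.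
apply: le_trans (ler_sum _ (fun k _ => bk k)) _.
by rewrite sumr_const card_ord natrM -mulrA [in leRHS]mulr_natl.
Qed.


Lemma sum_bool_count (s : seq nat) (P : pred nat) :
  (\sum_(i <- s) (P i : nat))%N = count P s.
Proof. by elim: s => [|a s IH]; rewrite ?big_nil // big_cons IH. Qed.

Lemma ysum (p : R) j k : p != 0 ->
  \sum_(j <= i < j + k) `|((i == 1%N)%:R : R)| `^ p <= 1.
Proof.
move=> p0; under eq_bigr do rewrite powR_bool //.
rewrite -natr_sum -[X in _ <= X]/(1%:R) ler_nat sum_bool_count /index_iota.
have := count_uniq_mem 1%N (iota_uniq j (j + k - j)).
by move=> ->; case: (_ \in _).
Qed.

Lemma ysum1 (p : R) k : p != 0 -> (0 < k)%N ->
  \sum_(1 <= i < 1 + k) `|((i == 1%N)%:R : R)| `^ p = 1.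
Proof.
move=> p0 k0; under eq_bigr do rewrite powR_bool //.
rewrite -natr_sum sum_bool_count /index_iota.
have := count_uniq_mem 1%N (iota_uniq 1 (1 + k - 1)).
by move=> ->; rewrite mem_iota; case: k k0.
Qed.

Lemma xsum_n (p : R) n r j : p != 0 -> (r <= n)%N ->
  \sum_(j <= i < j + n) `|((i %% n < r)%N%:R : R)| `^ p = r%:R.
Proof.
move=> p0 rn; under eq_bigr do rewrite powR_bool //.
rewrite (@per_sum (fun i => ((i %% n < r)%N%:R : R)) n); last by move=> i; rewrite modnDr.
rewrite (big_cat_nat _ (n:=r)) //=.
rewrite (eq_big_nat _ _ (F2 := fun=> 1)); last first.
  by move=> i /andP [_ ir]; rewrite modn_small ?ir // (leq_trans ir rn).
rewrite [X in _ + X](eq_big_nat _ _ (F2 := fun=> 0)); last first.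
  by move=> i /andP [ri ir]; rewrite modn_small // ltnNge ri.
by rewrite !sumr_const_nat subn0 mul0rn addr0.
Qed.


Lemma xsum_m (p : R) n r q : p != 0 -> (r < n)%N ->
  \sum_(n <= i < n + (q * n + r)) `|((i %% n < r)%N%:R : R)| `^ p = (q.+1 * r)%:R.
Proof.
move=> p0 rn.
rewrite (big_cat_nat _ (n:=n + q * n)) //=; [|by rewrite leq_addr|by lia].
rewrite split_sum.
rewrite (eq_bigr (fun=> r%:R)); last first.
  move=> k _; apply: xsum_n => //; exact: ltnW.
rewrite sumr_const card_ord.
under eq_big_nat => i /andP [h1 h2].
  rewrite powR_bool //.
  have -> : (i %% n < r)%N.
    have -> : i = ((q.+1) * n + (i - q.+1 * n))%N by rewrite mulSn; lia.
    by rewrite modnMDl modn_small; lia.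
  over.
rewrite sumr_const_nat addnA addKn -mulrnA -mulrnDr.
by congr (_ *+ _); rewrite mulSn addnC mulnC.
Qed.


Lemma bool_bounded (f : nat -> bool) : bounded_seq (fun i => ((f i)%:R : R)).
Proof. by exists 1 => i _; case: (f i); rewrite ?normr1 ?normr0. Qed.

Lemma part2 (p : R) m n : 1 <= p -> (0 < n)%N -> (0 < m)%N -> (n <= m)%N ->
  ~~ (n %| m)%N ->
     exists x y : nat -> R, bounded_seq x /\ bounded_seq y /\
       norm_inf_p_n p n x < norm_inf_p_n p m x /\
       norm_inf_p_n p m y < norm_inf_p_n p n y.
Proof.
move=> p1 n0 m0 nm ndm.
have p0 : 0 < p by apply: lt_le_trans p1.
have pn0 : p != 0 by rewrite gt_eqF.
have ip0 : 0 < p^-1 by rewrite invr_gt0.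
have hm := divn_eq m n.
set q := (m %/ n)%N in hm; set r := (m %% n)%N in hm ndm.
have r0 : (0 < r)%N by rewrite lt0n.
have rn : (r < n)%N by rewrite /r ltn_pmod.
have nltm : (n < m)%N.
  rewrite ltn_neqAle nm andbT; apply/eqP => E; move: ndm; by rewrite -E dvdnn.
exists (fun i => ((i %% n < r)%N%:R : R)), (fun i => ((i == 1%N)%:R : R)).
split; first exact: bool_bounded.
split; first exact: bool_bounded.
split.
- apply: (@le_lt_trans _ _ ((n%:R^-1 * r%:R) `^ p^-1)).
    by apply: norm_le => j _; rewrite /elt xsum_n // ltnW.
  apply: (@lt_le_trans _ _ ((m%:R^-1 * (q.+1 * r)%:R) `^ p^-1)); last first.
    have := elt_le_norm p0 m0 (bool_bounded (fun i => (i %% n < r)%N)) n0.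
    by rewrite /elt {2}hm xsum_m.
  apply: gt0_ltr_powR => //; rewrite ?nnegrE ?mulr_ge0 ?invr_ge0 //.
  rewrite mulrC ltr_pdivrMr ?ltr0n // (mulrC m%:R^-1) mulrAC ltr_pdivlMr ?ltr0n //.
  rewrite -!natrM ltr_nat hm; nia.
- apply: (@le_lt_trans _ _ ((m%:R^-1 * 1) `^ p^-1)).
    apply: norm_le => j _; rewrite /elt.
    apply: (ge0_ler_powR (ltW ip0)); rewrite ?nnegrE ?mulr_ge0 ?invr_ge0 //.
      by rewrite sumr_ge0 // => i _; rewrite powR_ge0.
    by rewrite ler_wpM2l ?invr_ge0 // ysum.
  apply: (@lt_le_trans _ _ ((n%:R^-1 * 1) `^ p^-1)); last first.
    have := elt_le_norm p0 n0 (bool_bounded (fun i => (i == 1)%N)) (isT : (0 < 1)%N).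
    by rewrite /elt ysum1.
  apply: gt0_ltr_powR => //; rewrite ?nnegrE ?mulr_ge0 ?invr_ge0 //.
  by rewrite !mulr1 ltf_pV2 ?posrE ?ltr0n // ltr_nat.
Qed.

End H.

Unset Implicit Arguments.

Theorem lemma1p3 (R : realType) (p : R) (m n : nat) :
  1 <= p -> (0 < n)%N -> (0 < m)%N -> (n <= m)%N ->
  ((n %| m)%N ->
     forall x : nat -> R, bounded_seq x ->
       norm_inf_p_n p m x <= norm_inf_p_n p n x) /\
  (~~ (n %| m)%N ->
     exists x y : nat -> R, bounded_seq x /\ bounded_seq y /\
       norm_inf_p_n p n x < norm_inf_p_n p m x /\
       norm_inf_p_n p m y < norm_inf_p_n p n y).
Proof.
move=> p1 n0 m0 nm; split; last exact: part2.
move=> dnm x bx; apply: part1 => //; exact: lt_le_trans p1.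
Qed.
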